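(* Let $\mathbf A$ be a finite totally ordered algebra. Then $\mathrm{nuP}_{\mathbf A}\subseteq\mathrm{MULTIMONOTONE}$.
   Context: A finite algebra has a finite universe and finitely many basic operations; it is totally ordered if some total order on its universe is preserved by all its basic operations. An $n$-ary circuit over $\mathbf A$ is a DAG with one output node, sources labelled by variables $x_1,\dots,x_n$ or constants from $A$, gates labelled by basic operations of $\mathbf A$; its size is nodes plus edges. A NuDFA over $\mathbf A$ is $(\{t_n\}_{n\ge1},\iota,S)$ with $t_n$ an $n$-ary circuit, $\iota:\{0,1\}\to A$, $S\subseteq A$; it accepts $b\in\{0,1\}^n$ iff $t_n(\iota(b_1),\dots,\iota(b_n))\in S$; polynomial size means size of $t_n$ polynomial in $n$. $\mathrm{nuP}_{\mathbf A}$ is the class of languages over $\{0,1\}$ accepted by polynomial-size NuDFAs over $\mathbf A$. $\mathrm{MULTIMONOTONE}$ is the class of languages $L$ for which there is a constant $c$ such that for each $n$, $L\cap\{0,1\}^n=\{x:g(M_1(x),\dots,M_c(x))=1\}$ for some function $g:\{0,1\}^c\to\{0,1\}$ and circuits $M_1,\dots,M_c$ using only fan-in-2 $\wedge,\vee$ gates (on input variables and constants) of total size polynomial in $n$. *)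

(* Defs.v *)
From mathcomp Require Import all_boot.
Set Implicit Arguments. Unset Strict Implicit. Unset Printing Implicit Defensive.

Section Algebra.
Variables (A O : finType) (ar : O -> nat).
Variable op : forall o : O, (ar o).-tuple A -> A.
Arguments op : clear implicits.

Definition total_order_rel (r : rel A) : Prop :=
  [/\ reflexive r, antisymmetric r, transitive r & total r].

Definition preserves (r : rel A) : Prop :=
  forall (o : O) (a b : (ar o).-tuple A),
    (forall i, r (tnth a i) (tnth b i)) -> r (op o a) (op o b).

Definition totally_ordered : Prop :=
  exists r : rel A, total_order_rel r /\ preserves r.

(** * Circuits over A, as straight-line programs (a topologically sorted DAG).
   Node number p may only refer to nodes q < p; the output node is the last
   node. *)
Inductive anode :=
| AVar of nat
| AConst of A
| AGate (o : O) of (ar o).-tuple nat.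

Definition acircuit := seq anode.

Definition anode_wf (n p : nat) (nd : anode) : bool :=
  match nd with
  | AVar i => i < n
  | AConst _ => true
  | AGate _ args => all (fun q => q < p) args
  end.

Definition acircuit_wf (n : nat) (c : acircuit) : bool :=
  (0 < size c) && all (fun pn => anode_wf n pn.1 pn.2) (zip (iota 0 (size c)) c).

Definition anode_edges (nd : anode) : nat :=
  match nd with AGate o _ => ar o | _ => 0 end.

Definition acircuit_size (c : acircuit) : nat :=
  size c + \sum_(nd <- c) anode_edges nd.

(** Evaluation; [d] is a dummy default value that is never used on
   well-formed circuits. *)
Definition anode_val (d : A) (x : seq A) (vs : seq A) (nd : anode) : A :=
  match nd with
  | AVar i => nth d x i
  | AConst a => a
  | AGate o args => op o (map_tuple (fun q => nth d vs q) args)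
  end.

Definition acircuit_eval (d : A) (c : acircuit) (x : seq A) : A :=
  last d (foldl (fun vs nd => rcons vs (anode_val d x vs nd)) [::] c).

Definition nuP (L : seq bool -> Prop) : Prop :=
  exists (t : nat -> acircuit) (iota0 : bool -> A) (S : {set A}) (C k : nat),
    (forall n, 1 <= n -> acircuit_wf n (t n) /\ acircuit_size (t n) <= C * n ^ k + C) /\
    (forall b : seq bool, 1 <= size b ->
       (L b <-> acircuit_eval (iota0 false) (t (size b)) (map iota0 b) \in S)).

End Algebra.

Inductive mnode :=
| MVar of nat
| MConst of bool
| MAnd of nat & nat
| MOr of nat & nat.

Definition mcircuit := seq mnode.

Definition mnode_wf (n p : nat) (nd : mnode) : bool :=
  match nd with
  | MVar i => i < n
  | MConst _ => true
  | MAnd q1 q2 | MOr q1 q2 => (q1 < p) && (q2 < p)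
  end.

Definition mcircuit_wf (n : nat) (c : mcircuit) : bool :=
  (0 < size c) && all (fun pn => mnode_wf n pn.1 pn.2) (zip (iota 0 (size c)) c).

Definition mnode_edges (nd : mnode) : nat :=
  match nd with MAnd _ _ | MOr _ _ => 2 | _ => 0 end.

Definition mcircuit_size (c : mcircuit) : nat :=
  size c + \sum_(nd <- c) mnode_edges nd.

Definition mnode_val (x : seq bool) (vs : seq bool) (nd : mnode) : bool :=
  match nd with
  | MVar i => nth false x i
  | MConst b => b
  | MAnd q1 q2 => nth false vs q1 && nth false vs q2
  | MOr q1 q2 => nth false vs q1 || nth false vs q2
  end.

Definition mcircuit_eval (c : mcircuit) (x : seq bool) : bool :=
  last false (foldl (fun vs nd => rcons vs (mnode_val x vs nd)) [::] c).

Definition MULTIMONOTONE (L : seq bool -> Prop) : Prop :=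
  exists c C k : nat, forall n : nat,
    exists (g : c.-tuple bool -> bool) (M : c.-tuple mcircuit),
      (forall i, mcircuit_wf n (tnth M i)) /\
      \sum_(i < c) mcircuit_size (tnth M i) <= C * n ^ k + C /\
      (forall b : seq bool, size b = n ->
         (L b <-> g [tuple mcircuit_eval (tnth M i) b | i < c])).

(* Main.v *)
Require Import Defs.
From mathcomp Require Import all_boot.
From mathcomp Require Import zify.
From Stdlib Require Import ClassicalEpsilon.
Set Implicit Arguments. Unset Strict Implicit. Unset Printing Implicit Defensive.

Inductive mterm := TRef of nat | TVar of nat | TConst of bool
 | TAnd of mterm & mterm | TOr of mterm & mterm.

Fixpoint tsize f := match f with TAnd f g | TOr f g => tsize f + tsize g + 1 | _ => 1 end.

Fixpoint teval (x vs : seq bool) f : bool := match f with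
 | TRef q => nth false vs q | TVar i => nth false x i | TConst v => v
 | TAnd f g => teval x vs f && teval x vs g
 | TOr f g => teval x vs f || teval x vs g end.

Fixpoint tref_ok (b : nat) f : bool := match f with
 | TRef q => q < b | TVar _ | TConst _ => true
 | TAnd f g | TOr f g => tref_ok b f && tref_ok b g end.

Fixpoint tvar_ok (n : nat) f : bool := match f with
 | TVar i => i < n | TRef _ | TConst _ => true
 | TAnd f g | TOr f g => tvar_ok n f && tvar_ok n g end.

Fixpoint tcomp (b : nat) f : mcircuit := match f with
 | TRef q => [:: MAnd q q]
 | TVar i => [:: MVar i]
 | TConst v => [:: MConst v]
 | TAnd f g => tcomp b f ++ tcomp (b + tsize f) g ++
      [:: MAnd (b + tsize f).-1 (b + tsize f + tsize g).-1]
 | TOr f g => tcomp b f ++ tcomp (b + tsize f) g ++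
      [:: MOr (b + tsize f).-1 (b + tsize f + tsize g).-1]
 end.

Definition mtr x vs (c : mcircuit) :=
  foldl (fun vs nd => rcons vs (mnode_val x vs nd)) vs c.

Definition wfat n b (c : mcircuit) :=
  all (fun pn => mnode_wf n pn.1 pn.2) (zip (iota b (size c)) c).

Lemma tsize_gt0 f : 0 < tsize f.
Proof. by case: f => //= *; rewrite addn1. Qed.

Lemma size_tcomp b f : size (tcomp b f) = tsize f.
Proof.
elim: f b => //= f IHf g IHg b; by rewrite !size_cat IHf IHg /= addnA.
Qed.

Lemma mtr_cat x vs c1 c2 : mtr x vs (c1 ++ c2) = mtr x (mtr x vs c1) c2.
Proof. by rewrite /mtr foldl_cat. Qed.

Lemma size_mtr x vs c : size (mtr x vs c) = size vs + size c.
Proof.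
elim: c vs => [|nd c IH] vs /=; first by rewrite addn0.
by rewrite IH size_rcons addSnnS.
Qed.

Lemma nth_mtr x vs c i : i < size vs -> nth false (mtr x vs c) i = nth false vs i.
Proof.
elim: c vs => [|nd c IH] vs //= Hi.
rewrite IH ?size_rcons 1?ltnW //. by rewrite nth_rcons Hi.
Qed.

Lemma wfat_cat n b c1 c2 : wfat n b (c1 ++ c2) = wfat n b c1 && wfat n (b + size c1) c2.
Proof.
by rewrite /wfat size_cat iotaD zip_cat ?size_iota // all_cat.
Qed.

Lemma teval_ext x vs vs' b f : tref_ok b f ->
  (forall i, i < b -> nth false vs' i = nth false vs i) ->
  teval x vs' f = teval x vs f.
Proof.
move=> H E; elim: f H => //=; try by move=> q Hq; rewrite E.
- by move=> f IHf g IHg /andP[/IHf -> /IHg ->].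
- by move=> f IHf g IHg /andP[/IHf -> /IHg ->].
Qed.

Lemma tref_ok_mono b b' f : b <= b' -> tref_ok b f -> tref_ok b' f.
Proof.
move=> Hb; elim: f => //=.
- move=> q Hq; exact: leq_trans Hq Hb.
- by move=> f IHf g IHg /andP[/IHf -> /IHg ->].
- by move=> f IHf g IHg /andP[/IHf -> /IHg ->].
Qed.

Lemma tcomp_ok x vs f : tref_ok (size vs) f ->
  nth false (mtr x vs (tcomp (size vs) f)) (size vs + tsize f).-1 = teval x vs f.
Proof.
elim: f vs => /=.
- by move=> q vs Hq; rewrite addn1 /= nth_rcons ltnn eqxx andbb.
- by move=> i vs _; rewrite nth_rcons addn1 ltnn eqxx.
- by move=> v vs _; rewrite nth_rcons addn1 ltnn eqxx.
all: move=> f IHf g IHg vs /andP[Hf Hg].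
all: rewrite !mtr_cat /=; set vs1 := mtr x vs (tcomp (size vs) f).
all: have s1 : size vs1 = size vs + tsize f by rewrite size_mtr size_tcomp.
all: have Hg1 : tref_ok (size vs1) g by apply: tref_ok_mono Hg; rewrite s1 leq_addr.
all: have := IHg vs1 Hg1; rewrite s1 => IHg'.
all: set vs2 := mtr x vs1 _.
all: have s2 : size vs2 = size vs + tsize f + tsize g by rewrite size_mtr size_tcomp s1.
all: have -> : (size vs + (tsize f + tsize g + 1)).-1 = size vs + tsize f + tsize g by lia.
all: rewrite nth_rcons s2 ltnn eqxx.
all: have pf := tsize_gt0 f; have pg := tsize_gt0 g.
all: rewrite IHg' nth_mtr; last by rewrite s1; lia.
all: rewrite IHf // (teval_ext x (vs := vs) Hg) // => i Hi; rewrite nth_mtr //.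
Qed.

Lemma tcomp_wf n f b : tref_ok b f -> tvar_ok n f -> wfat n b (tcomp b f).
Proof.
elim: f b => /=.
- by move=> q b Hq _; rewrite /wfat /= Hq.
- by move=> i b _ Hi; rewrite /wfat /= Hi.
- by move=> v b _ _; rewrite /wfat.
all: move=> f IHf g IHg b /andP[Hf Hg] /andP[Vf Vg].
all: rewrite !wfat_cat IHf //= size_tcomp IHg //= ?(tref_ok_mono _ Hg) ?leq_addr //.
all: rewrite /wfat /= !size_tcomp; have pf := tsize_gt0 f; have pg := tsize_gt0 g.
all: rewrite andbT; apply/andP; split; lia.
Qed.


Definition bigOr (fs : seq mterm) := foldr TOr (TConst false) fs.
Definition bigAnd (fs : seq mterm) := foldr TAnd (TConst true) fs.

Lemma teval_bigOr x vs fs : teval x vs (bigOr fs) = has (teval x vs) fs.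
Proof. by elim: fs => //= f fs ->. Qed.
Lemma teval_bigAnd x vs fs : teval x vs (bigAnd fs) = all (teval x vs) fs.
Proof. by elim: fs => //= f fs ->. Qed.
Lemma tref_bigOr b fs : tref_ok b (bigOr fs) = all (tref_ok b) fs.
Proof. by elim: fs => //= f fs ->. Qed.
Lemma tref_bigAnd b fs : tref_ok b (bigAnd fs) = all (tref_ok b) fs.
Proof. by elim: fs => //= f fs ->. Qed.
Lemma tvar_bigOr b fs : tvar_ok b (bigOr fs) = all (tvar_ok b) fs.
Proof. by elim: fs => //= f fs ->. Qed.
Lemma tvar_bigAnd b fs : tvar_ok b (bigAnd fs) = all (tvar_ok b) fs.
Proof. by elim: fs => //= f fs ->. Qed.
Lemma tsize_bigOr m fs : all (fun f => tsize f <= m) fs ->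
  tsize (bigOr fs) <= size fs * (m + 1) + 1.
Proof.
elim: fs => //= f fs IH /andP[H1 /IH]; move: H1; lia.
Qed.
Lemma tsize_bigAnd m fs : all (fun f => tsize f <= m) fs ->
  tsize (bigAnd fs) <= size fs * (m + 1) + 1.
Proof.
elim: fs => //= f fs IH /andP[H1 /IH]; move: H1; lia.
Qed.

Lemma msize_le c : mcircuit_size c <= 3 * size c.
Proof.
rewrite /mcircuit_size; elim: c => [|nd c IH]; first by rewrite big_nil.
rewrite big_cons /=; have : mnode_edges nd <= 2 by case: nd.
move: IH; lia.
Qed.


Section Comp.
Variables (A O : finType) (ar : O -> nat) (op : forall o, (ar o).-tuple A -> A).
Variables (r : rel A) (iota0 : bool -> A).

Definition term (nd : @anode A O ar) (pos : nat -> A -> nat) (a : A) : mterm :=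
 match nd with
 | AVar i => if r a (iota0 false) then TConst true
             else if r a (iota0 true) then TVar i else TConst false
 | AConst c => TConst (r a c)
 | AGate o args => bigOr [seq bigAnd [seq TRef (pos (tnth args j) (tnth tu j)) | j <- enum 'I_(ar o)]
                          | tu <- enum {: (ar o).-tuple A} & r a (@op o tu)]
 end.

Definition upd (pos : nat -> A -> nat) p a v :=
  fun q a' => if (q == p) && (a' == a) then v else pos q a'.

Fixpoint bcomp p b pos (mk : A -> mterm) (s : seq A) : mcircuit * (nat -> A -> nat) :=
 match s with
 | [::] => ([::], pos)
 | a :: s' => let rr := bcomp p (b + tsize (mk a)) (upd pos p a (b + tsize (mk a)).-1) mk s' in
              (tcomp b (mk a) ++ rr.1, rr.2)
 end.

Lemma size_bcomp p b pos mk s : size (bcomp p b pos mk s).1 = \sum_(a <- s) tsize (mk a).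
Proof.
elim: s b pos => [|a s IH] b pos /=; first by rewrite big_nil.
by rewrite size_cat IH size_tcomp big_cons.
Qed.

Lemma bcomp_wf n p mk s b pos : (forall a, tref_ok b (mk a)) -> (forall a, tvar_ok n (mk a)) ->
  wfat n b (bcomp p b pos mk s).1.
Proof.
elim: s b pos => [|a s IH] b pos Hr Hv //=.
rewrite wfat_cat tcomp_wf //= size_tcomp IH // => a'.
apply: tref_ok_mono (Hr a'); exact: leq_addr.
Qed.

Lemma bcomp_ok x p mk s vs pos : (forall a, tref_ok (size vs) (mk a)) ->
  let rr := bcomp p (size vs) pos mk s in let vs' := mtr x vs rr.1 in
  (forall i, i < size vs -> nth false vs' i = nth false vs i) /\
  (forall q a, (q != p) || (a \notin s) -> rr.2 q a = pos q a) /\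
  (forall a, a \in s -> rr.2 p a < size vs' /\ nth false vs' (rr.2 p a) = teval x vs (mk a)).
Proof.
elim: s vs pos => [|a s IH] vs pos Hr /=.
  by split=> //; split.
set vs1 := mtr x vs (tcomp (size vs) (mk a)).
have s1 : size vs1 = size vs + tsize (mk a) by rewrite size_mtr size_tcomp.
have Hr1 : forall a', tref_ok (size vs1) (mk a').
  by move=> a'; apply: tref_ok_mono (Hr a'); rewrite s1 leq_addr.
have := IH vs1 (upd pos p a (size vs + tsize (mk a)).-1) Hr1.
rewrite s1 mtr_cat; set rr := bcomp _ _ _ _ _ => /= [[P1 [P2 P3]]].
have pa := tsize_gt0 (mk a).
split; [|split].
- move=> i Hi; rewrite P1 ?s1; last by lia.
  by rewrite nth_mtr.
- move=> q a'; rewrite in_cons negb_or => H.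
  rewrite P2; last by move: H; case: (q != p) => //= /andP[].
  rewrite /upd; case: eqP H => //= -> /andP[/negPf -> _] //.
- move=> a'; rewrite in_cons; case: (boolP (a' \in s)) => Hs.
    move=> _; have [L E] := P3 a' Hs; split => //; rewrite E.
    by apply: teval_ext (Hr a') _ => i Hi; rewrite nth_mtr.
  rewrite orbF => /eqP E; subst a'.
  rewrite P2; last by rewrite Hs orbT.
  rewrite /upd !eqxx /=; split.
    rewrite size_mtr s1; lia.
  rewrite P1 ?s1; last by lia.
  by rewrite tcomp_ok.
Qed.


Definition Inv p vs (pos : nat -> A -> nat) avs :=
  forall q a, q < p -> pos q a < size vs /\ nth false vs (pos q a) = r a (nth (iota0 false) avs q).

Lemma term_refs n p vs pos avs nd a : Inv p vs pos avs -> anode_wf n p nd ->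
  tref_ok (size vs) (term nd pos a) && tvar_ok n (term nd pos a).
Proof.
move=> I; case: nd => [i|c|o args] /=.
- by move=> Hi; case: (r a _); case: (r a _).
- by [].
move=> /allP Ha; rewrite tref_bigOr tvar_bigOr.
apply/andP; split; rewrite all_map; apply/allP => tu _ /=;
  rewrite ?tref_bigAnd ?tvar_bigAnd all_map; apply/allP => j _ //=.
by have [] := I (tnth args j) (tnth tu j) (Ha _ (mem_tnth _ _)).
Qed.

Lemma term_ok (bs : seq bool) n p vs pos avs nd a :
  reflexive r -> transitive r -> preserves op r -> r (iota0 false) (iota0 true) ->
  size bs = n -> Inv p vs pos avs -> anode_wf n p nd ->
  teval bs vs (term nd pos a) = r a (anode_val op (iota0 false) (map iota0 bs) avs nd).
Proof.
move=> Rr Rt Rp R01 Hn I; case: nd => [i|c|o args] /=.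
- move=> Hi; rewrite (nth_map false); last by rewrite Hn.
  case E0: (r a (iota0 false)); case E1: (r a (iota0 true)) => /=;
  case: (nth false bs i) => //=.
  all: first [by rewrite (Rt _ _ _ E0 R01) in E1 | by rewrite E0 | by rewrite E1 | idtac].
- by [].
move=> /allP Ha; rewrite teval_bigOr has_map.
set X := map_tuple _ args.
have EX : forall j, tnth X j = nth (iota0 false) avs (tnth args j) by move=> j; rewrite tnth_map.
have Ej : forall tu : (ar o).-tuple A, forall j,
    nth false vs (pos (tnth args j) (tnth tu j)) = r (tnth tu j) (tnth X j).
  by move=> tu j; rewrite EX; have [] := I (tnth args j) (tnth tu j) (Ha _ (mem_tnth _ _)).
apply/hasP/idP.
- move=> [tu]; rewrite mem_filter => /andP[H1 _]; rewrite /= teval_bigAnd all_map => /allP H2.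
  apply: Rt H1 _; apply: Rp => j; rewrite -Ej; exact: (H2 j (mem_enum _ _)).
- move=> H; exists X; first by rewrite mem_filter H mem_enum.
  rewrite /= teval_bigAnd all_map; apply/allP => j _ /=; by rewrite Ej.
Qed.


Fixpoint ccomp p b pos (c : seq (@anode A O ar)) : mcircuit * (nat -> A -> nat) :=
 match c with
 | [::] => ([::], pos)
 | nd :: c' => let r1 := bcomp p b pos (term nd pos) (enum A) in
               let r2 := ccomp p.+1 (b + size r1.1) r1.2 c' in
               (r1.1 ++ r2.1, r2.2)
 end.

Definition atr d x avs (c : seq (@anode A O ar)) :=
  foldl (fun vs nd => rcons vs (anode_val op d x vs nd)) avs c.

Definition awfat n p (c : seq (@anode A O ar)) :=
  all (fun pn => anode_wf n pn.1 pn.2) (zip (iota p (size c)) c).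

Lemma ccomp_ok (bs : seq bool) n :
  reflexive r -> transitive r -> preserves op r -> r (iota0 false) (iota0 true) ->
  size bs = n -> forall c p vs pos avs, size avs = p -> Inv p vs pos avs -> awfat n p c ->
  let rr := ccomp p (size vs) pos c in
  Inv (p + size c) (mtr bs vs rr.1) rr.2 (atr (iota0 false) (map iota0 bs) avs c) /\
  wfat n (size vs) rr.1.
Proof.
move=> Rr Rt Rp R01 Hn; elim=> [|nd c IH] p vs pos avs Ha I /=.
  by rewrite addn0.
rewrite /awfat /= => /andP[Wnd Wc].
have Ht := fun a => term_refs a I Wnd.
have [B1 [B2 B3]] := bcomp_ok bs p (enum A) pos (fun a => proj1 (andP (Ht a))).
set r1 := bcomp _ _ _ _ _ in B1 B2 B3 *.
set vs1 := mtr bs vs r1.1 in B1 B2 B3 *.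
have s1 : size vs1 = size vs + size r1.1 by rewrite size_mtr.
have I1 : Inv p.+1 vs1 r1.2 (rcons avs (anode_val op (iota0 false) (map iota0 bs) avs nd)).
  move=> q a; rewrite ltnS leq_eqVlt => /orP[/eqP -> | Hq].
    have [L E] := B3 a (mem_enum _ _); split => //.
    by rewrite E nth_rcons Ha ltnn eqxx (term_ok _ Rr Rt Rp R01 Hn I Wnd).
  have [L E] := I q a Hq.
  rewrite B2; last by rewrite neq_ltn Hq.
  split; first by rewrite s1 ltn_addr.
  by rewrite B1 // E nth_rcons Ha Hq.
have := IH p.+1 vs1 r1.2 _ _ I1; rewrite size_rcons Ha -s1 => /(_ erefl Wc) [I2 W2].
rewrite mtr_cat -addSnnS; split => //.
by rewrite wfat_cat -s1 W2 andbT bcomp_wf // => a; case/andP: (Ht a).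
Qed.


Definition Tb := \sum_(o : O) (#|A| ^ (ar o) * (2 * ar o + 2)) + 1.

Lemma term_size nd pos a : tsize (term nd pos a) <= Tb.
Proof.
rewrite /Tb; case: nd => [i|c|o args] /=.
- by case: (r a (iota0 false)); case: (r a (iota0 true)); rewrite /= addn1.
- by rewrite /= addn1.
apply: leq_trans (tsize_bigOr (m := 2 * ar o + 1) _) _.
  rewrite all_map; apply/allP => tu _ /=.
  apply: leq_trans (tsize_bigAnd (m := 1) _) _; first by rewrite all_map; apply/allP.
  by rewrite size_map size_enum_ord; lia.
rewrite leq_add2r (bigD1 o) //= size_map.
apply: leq_trans (leq_addr _ _); apply: leq_mul; last by lia.
rewrite size_filter; apply: leq_trans (count_size _ _) _.
by rewrite -cardE card_tuple.
Qed.

Lemma sum_le (T : Type) (s : seq T) (F : T -> nat) m : (forall a, F a <= m) ->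
  \sum_(a <- s) F a <= size s * m.
Proof.
move=> H; elim: s => [|a s IH]; first by rewrite big_nil.
by rewrite big_cons /= mulSn leq_add.
Qed.

Lemma size_ccomp p b pos c : size (ccomp p b pos c).1 <= #|A| * Tb * size c.
Proof.
elim: c p b pos => [|nd c IH] p b pos //=.
rewrite size_cat size_bcomp mulnS leq_add //.
by rewrite cardE; apply: sum_le => a; apply: term_size.
Qed.

End Comp.


Lemma sum_ord_le m K (F : 'I_m -> nat) : (forall i, F i <= K) -> \sum_(i < m) F i <= m * K.
Proof. move=> H; apply: (@leq_trans (\sum_(i < m) K)). exact: leq_sum. by rewrite sum_nat_const card_ord. Qed.

Lemma size_atr (A O : finType) (ar : O -> nat) (op : forall o, (ar o).-tuple A -> A) d x avs c :
  size (atr op d x avs c) = size avs + size c.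
Proof.
elim: c avs => [|nd c IH] avs /=; first by rewrite addn0.
by rewrite IH size_rcons addSnnS.
Qed.

Lemma core (A O : finType) (ar : O -> nat) (op : forall o, (ar o).-tuple A -> A)
  (r : rel A) (L : seq bool -> Prop) (t : nat -> acircuit A ar) (iota0 : bool -> A)
  (S : {set A}) (C k : nat) :
  reflexive r -> antisymmetric r -> transitive r -> preserves op r ->
  r (iota0 false) (iota0 true) ->
  (forall n, 1 <= n -> acircuit_wf n (t n) /\ acircuit_size (t n) <= C * n ^ k + C) ->
  (forall b : seq bool, 1 <= size b ->
       (L b <-> acircuit_eval op (iota0 false) (t (size b)) (map iota0 b) \in S)) ->
  MULTIMONOTONE L.
Proof.
move=> Rr Ra Rt Rp R01 Ht HL.
set X := #|A|; set T := Tb A ar.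
exists X, (3 * X * (X * T * C + 1) + X * 3), k => n.
case: n => [|n'].
  exists (fun _ => if excluded_middle_informative (L [::]) then true else false).
  exists [tuple [:: MConst false] | i < X].
  split; first by move=> i; rewrite tnth_mktuple.
  split.
    apply: (@leq_trans (X * 1)); last by lia.
    by apply: sum_ord_le => i; rewrite tnth_mktuple /mcircuit_size big_cons big_nil.
  move=> b /size0nil ->; case: excluded_middle_informative => //.
set n := n'.+1.
have [Wf Sz] := Ht n erefl.
set c := t n.
set rr := ccomp op r iota0 0 0 (fun _ _ => 0) c.
set kk := fun a => rr.2 (size c).-1 a.
set Mc := fun a => rr.1 ++ [:: MAnd (kk a) (kk a)].
have Hc : 0 < size c by case/andP: Wf.
have Hlt : (size c).-1 < size c by rewrite ltn_predL.
have Aw : awfat n 0 c by case/andP: Wf.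
have Inv0 : forall vs, Inv r iota0 0 vs (fun _ _ => 0) [::] by [].
have key : forall b : seq bool, size b = n ->
   (forall a, kk a < size rr.1) /\ wfat n 0 rr.1 /\
   forall a, mcircuit_eval (Mc a) b = r a (acircuit_eval op (iota0 false) c (map iota0 b)).
  move=> b Hb.
  have [I W] := ccomp_ok (c := c) (p := 0) (vs := [::]) (pos := fun _ _ => 0) (avs := [::])
     Rr Rt Rp R01 Hb erefl (Inv0 _) Aw.
  rewrite add0n -/rr in I W.
  split; [|split] => //.
    move=> a; have [L1 _] := I (size c).-1 a Hlt.
    by rewrite size_mtr in L1.
  move=> a; have [_ E] := I (size c).-1 a Hlt.
  rewrite /mcircuit_eval -/(mtr b [::] _) mtr_cat /= last_rcons andbb -/rr -/(kk a) E.
  congr (r a _); rewrite /acircuit_eval -/(atr op (iota0 false) (map iota0 b) [::] c).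
  by rewrite -nth_last size_atr.
have [Kk [W _]] := key (nseq n false) (size_nseq _ _).
exists (fun tt : X.-tuple bool => [exists i, (enum_val i \in S) && tnth tt i &&
          [forall j, tnth tt j ==> r (enum_val j) (enum_val i)]]).
exists [tuple Mc (enum_val i) | i < X].
split.
  move=> i; rewrite tnth_mktuple; apply/andP; split; first by rewrite size_cat addn1.
  change (wfat n 0 (Mc (enum_val i))); rewrite /Mc wfat_cat W /wfat /= Kk //=.
split.
  have HS : \sum_(i < X) mcircuit_size (tnth [tuple Mc (enum_val i) | i < X] i) <=
     X * (3 * (X * T * (C * n ^ k + C) + 1)).
    apply: sum_ord_le => i; rewrite tnth_mktuple; apply: leq_trans (msize_le _) _.
    rewrite leq_mul2l /= size_cat /= leq_add2r.
    apply: leq_trans (size_ccomp _ _ _ _ _ _ _) _.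
    rewrite leq_mul2l; apply/orP; right; apply: leq_trans Sz.
    exact: leq_addr.
  apply: leq_trans HS _.
  set N := n ^ k; nia.
move=> b Hb; rewrite HL Hb //.
have [_ [_ E]] := key b Hb.
set v := acircuit_eval _ _ _ _ in E *.
split.
  move=> vS; apply/existsP; exists (enum_rank v).
  rewrite !tnth_mktuple E enum_rankK vS Rr /=.
  apply/forallP => j; rewrite !tnth_mktuple E; exact/implyP.
move=> /existsP [i]; rewrite !tnth_mktuple E => /andP[/andP[iS Hi] /forallP Hj].
have := Hj (enum_rank v); rewrite !tnth_mktuple E enum_rankK Rr /= => Hv.
by have <- : enum_val i = v by apply: Ra; rewrite Hi Hv.
Qed.

Unset Implicit Arguments.
Theorem mainTheorem3 (A O : finType) (ar : O -> nat)
    (op : forall o, (ar o).-tuple A -> A) :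
  totally_ordered op ->
  forall L : seq bool -> Prop, nuP op L -> MULTIMONOTONE L.
Proof.
move=> [r0 [[Rr Ra Rt Rtot] Rp]] L [t [iota0 [S [C [k [H1 H2]]]]]].
case: (boolP (r0 (iota0 false) (iota0 true))) => h.
  exact: (core Rr Ra Rt Rp h H1 H2).
apply: (core (r := fun x y => r0 y x)) H1 H2.
- by move=> x; apply: Rr.
- by move=> x y /andP[a b]; apply: Ra; rewrite a b.
- by move=> x y z a b; apply: Rt b a.
- by move=> o a b H; apply: Rp.
- by have := Rtot (iota0 false) (iota0 true); rewrite (negbTE h).
Qed.
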